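(* Let $U$ be a countably infinite universe and $\mathcal{C}=(L_1,L_2,\ldots)$ a countably infinite collection of languages over $U$, and let $m^\star(L_j)$ be the values computed by the Procedure described in the context. Suppose that for every $t\in\mathbb{N}$, the set $\{j: m^\star(L_j)+1\le t\}$ is finite. Then there exists an algorithm that non-uniformly generates from $\mathcal{C}$ with generation times forming a Pareto-optimal sequence.
   Context: A language is an infinite subset of $U$. A collection is a sequence of languages; repetitions are allowed and entries are distinguished by their index. An enumeration of a language $L$ is a sequence $x_1,x_2,\ldots$ with every $x_t\in L$ and every $x\in L$ equal to some $x_t$. A generating algorithm at each time $t\ge1$ receives $x_1,\ldots,x_t$ and outputs $z_t\in U$; $S_t$ is the set of distinct strings among $x_1,\ldots,x_t$. An algorithm non-uniformly generates from $\mathcal{C}$ with (finite) generation times $t(L_i)$ if for every $i$ and every enumeration of $L_i$, $z_t\in L_i\setminus S_t$ whenever $|S_t|\ge t(L_i)$. For an algorithm $\mathcal{G}$, $t_{\mathcal{G}}(L_i)$ denotes the least such value for $L_i$ ($\infty$ if none). A sequence $t(L_1),t(L_2),\ldots$ is Pareto-optimal if every algorithm $\mathcal{G}$ that non-uniformly generates from $\mathcal{C}$ and satisfies $t_{\mathcal{G}}(L_i)<t(L_i)$ for some $i$ also satisfies $t_{\mathcal{G}}(L_j)>t(L_j)$ for some other $j$. Procedure. Set $\mathcal{C}'_0=()$. For $i=1,2,3,\ldots$: append the entry $L_i$ at the end of $\mathcal{C}'_{i-1}$ to get $\mathcal{C}'_i=(L'_1,\ldots,L'_i)$, and set $j=i$.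 Repeat: (1) among all subcollections $\mathcal{D}$ of the entries $(L'_1,\ldots,L'_j)$ that include the entry $L'_j$ and satisfy $|\bigcap_{L\in\mathcal{D}}L|<\infty$, let $m_{\mathrm{chk}}$ be the maximum of $|\bigcap_{L\in\mathcal{D}}L|$ and $\mathcal{C}_{\mathrm{chk}}$ a maximizer; if no such $\mathcal{D}$ exists, set $\mathcal{C}_{\mathrm{chk}}=()$, $m_{\mathrm{chk}}=0$. (2) If $j\le1$ or $m_{\mathrm{chk}}>m^\star(L'_{j-1})$ (already fixed since $L'_{j-1}$ has original index $<i$), stop the loop. (3) Otherwise swap positions $j-1$ and $j$ in $\mathcal{C}'_i$, set $j\leftarrow j-1$ and return to (1). When the loop stops, set $\mathcal{C}(L_i)=\mathcal{C}_{\mathrm{chk}}$ and $m^\star(L_i)=m_{\mathrm{chk}}$. *)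

(* Defs.v *)
From Stdlib Require Import ClassicalEpsilon.
From mathcomp Require Import all_boot.

Set Implicit Arguments.
Unset Strict Implicit.
Unset Printing Implicit Defensive.

Section Defs.
Variable U : countType.

Definition card_is (A : U -> Prop) (n : nat) : Prop :=
  exists s : seq U, [/\ uniq s, (forall x, A x <-> x \in s) & size s = n].

Definition finite_set (A : U -> Prop) : Prop := exists n, card_is A n.

(* A collection is a sequence of languages indexed by nat (index i stands
   for the paper's L_{i+1}); entries are distinguished by their index. *)
Variable L : nat -> U -> Prop.

Definition inter (s : seq nat) : U -> Prop := fun x => forall d, d \in s -> L d x.

(* Step (1): [pre] lists the original indices of the entries at positions
   1..j-1, and [k] is the entry at position j.  A subcollection D of the
   entries at positions 1..j containing position j is [k :: mask m pre]. *)
Definition chk_val (pre : seq nat) (k : nat) (n : nat) : Prop :=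
  exists m : bitseq, size m = size pre /\ card_is (inter (k :: mask m pre)) n.

Definition mchk (pre : seq nat) (k : nat) : nat :=
  epsilon (inhabits 0%N) (fun n =>
    (chk_val pre k n /\ forall v, chk_val pre k v -> v <= n)
    \/ ((forall v, ~ chk_val pre k v) /\ n = 0%N)).

(* The current collection is
   rev rp ++ k :: suf, with k at position j = size rp + 1.  [ms] gives the
   already-fixed values m^star of entries with smaller original index.
   Returns the new ordering C'_i and m^star(L_k). *)
Fixpoint insert_loop (ms : nat -> nat) (k : nat) (rp suf : seq nat)
  : seq nat * nat :=
  let c := mchk (rev rp) k in
  match rp with
  | [::] => (k :: suf, c)                         (* j <= 1 : stop *)
  | p :: rp' =>
      if ms p < c then (rev rp ++ k :: suf, c)
      else insert_loop ms k rp' (p :: suf)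
  end.

(* The Procedure run for the first i entries: returns C'_i and m^star
   (meaningful on indices < i). *)
Fixpoint proc (i : nat) : seq nat * (nat -> nat) :=
  match i with
  | 0 => ([::], fun _ => 0%N)
  | i'.+1 =>
      let (ord, ms) := proc i' in
      let (ord', c) := insert_loop ms i' (rev ord) [::] in
      (ord', fun j => if j == i' then c else ms j)
  end.

Definition mstar (k : nat) : nat := (proc k.+1).2 k.

(* x : nat -> U enumerates A; x t is the paper's x_{t+1} *)
Definition enumerates (A : U -> Prop) (x : nat -> U) : Prop :=
  (forall t, A (x t)) /\ (forall y, A y -> exists t, x t = y).

Definition prefix (x : nat -> U) (t : nat) : seq U := [seq x s | s <- iota 0 t].

(* An algorithm maps the observed sequence x_1..x_t to z_t. *)
Definition algorithm := seq U -> U.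

Definition gen_with (G : algorithm) (i n : nat) : Prop :=
  forall x, enumerates (L i) x -> forall t, 0 < t ->
    n <= size (undup (prefix x t)) ->
    L i (G (prefix x t)) /\ G (prefix x t) \notin prefix x t.

Definition nonuniform_gen_times (G : algorithm) (T : nat -> nat) : Prop :=
  forall i, gen_with G i (T i).

Definition nonuniform_gen (G : algorithm) : Prop :=
  forall i, exists n, gen_with G i n.

(* t_G(L_i) < b  (t_G = least valid time, infinity if none) *)
Definition tG_lt (G : algorithm) (i b : nat) : Prop :=
  exists n, n < b /\ gen_with G i n.

Definition tG_gt (G : algorithm) (i b : nat) : Prop :=
  forall n, gen_with G i n -> b < n.

Definition pareto_optimal (T : nat -> nat) : Prop :=
  forall G : algorithm, nonuniform_gen G ->
    forall i, tG_lt G i (T i) -> exists j, j <> i /\ tG_gt G j (T j).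

End Defs.

(* Main.v *)
Require Import Defs.
From Stdlib Require Import ClassicalEpsilon Classical.
From mathcomp Require Import all_boot.
Set Implicit Arguments.
Unset Strict Implicit.
Unset Printing Implicit Defensive.
Section Aux.
Variable U : countType.
Variable L : nat -> U -> Prop.

Lemma card_is_uniq (A : U -> Prop) n1 n2 : card_is A n1 -> card_is A n2 -> n1 = n2.
Proof.
move=> [s1 [u1 h1 <-]] [s2 [u2 h2 <-]].
apply: perm_size; apply: uniq_perm => // x.
apply/idP/idP => H; [apply/h2/h1 | apply/h1/h2] => //.
Qed.

Lemma card_is_ext (A B : U -> Prop) n : (forall x, A x <-> B x) -> card_is A n -> card_is B n.
Proof.
move=> e [s [u h hs]]; exists s; split => // x; rewrite -h; exact: iff_sym (e x).
Qed.

Lemma inter_bound pre : forall base, exists B, forall m v, size m = size pre ->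
  card_is (inter L (base ++ mask m pre)) v -> v <= B.
Proof.
elim: pre => [|p pre IH] base.
  case: (classic (exists v0, card_is (inter L (base ++ [::])) v0)) => [[v0 h0]|hn].
    exists v0 => m v _ hv; rewrite mask0 in hv; by rewrite (card_is_uniq hv h0).
  exists 0 => m v _ hv; rewrite mask0 in hv; case: hn; by exists v.
have [B1 h1] := IH (rcons base p).
have [B2 h2] := IH base.
exists (maxn B1 B2) => [[|b m]] v //= [hs].
case: b => hv.
  by rewrite leq_max (h1 m v hs) // cat_rcons.
by rewrite leq_max (h2 m v hs) ?orbT.
Qed.

Lemma max_exists (P : nat -> Prop) B : (exists v, P v) -> (forall v, P v -> v <= B) ->
  exists n, P n /\ forall v, P v -> v <= n.
Proof.
elim: B => [|B IH] [v hv] hb.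
  exists 0; have := hb _ hv; rewrite leqn0 => /eqP e; subst v; split => // w /hb.
case: (classic (P B.+1)) => [hB|hB]; first by exists B.+1.
apply: IH; first by exists v.
move=> w hw; have := hb _ hw; rewrite leq_eqVlt => /orP [/eqP e|//].
by subst w.
Qed.

Lemma mchk_spec pre k :
  (chk_val L pre k (mchk L pre k) /\ forall v, chk_val L pre k v -> v <= mchk L pre k)
  \/ ((forall v, ~ chk_val L pre k v) /\ mchk L pre k = 0).
Proof.
apply: (@epsilon_spec nat (inhabits 0) (fun n =>
    (chk_val L pre k n /\ forall v, chk_val L pre k v -> v <= n)
    \/ ((forall v, ~ chk_val L pre k v) /\ n = 0))).
case: (classic (exists v, chk_val L pre k v)) => [hv|hn].
  have [B hB] := inter_bound pre [:: k].
  have hb : forall v, chk_val L pre k v -> v <= B.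
    by move=> v [m [hm hc]]; apply: (hB m v hm hc).
  have [n [h1 h2]] := max_exists hv hb.
  by exists n; left.
exists 0; right; split => // v hv; apply: hn; by exists v.
Qed.

Lemma chk_le_mchk pre k v : chk_val L pre k v -> v <= mchk L pre k.
Proof.
move=> hv; case: (mchk_spec pre k) => [[_ h]|[h _]]; first exact: h.
by case: (h v).
Qed.

Lemma mchk_pos pre k : 0 < mchk L pre k -> chk_val L pre k (mchk L pre k).
Proof. by case: (mchk_spec pre k) => [[h _]|[_ ->]]. Qed.

Lemma chk_ext pre ext k v : chk_val L pre k v -> chk_val L (pre ++ ext) k v.
Proof.
move=> [m [hm hc]]; exists (m ++ nseq (size ext) false); split.
  by rewrite !size_cat size_nseq hm.
by rewrite mask_cat // mask_false cats0.
Qed.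

Lemma mchk_mono pre ext k : mchk L pre k <= mchk L (pre ++ ext) k.
Proof.
case: (mchk_spec pre k) => [[h _]|[_ ->]] //.
exact/chk_le_mchk/chk_ext.
Qed.

Lemma chk_of_sub pre k (E : seq nat) v : k \in E -> (forall x, x \in E -> x = k \/ x \in pre) ->
  card_is (inter L E) v -> chk_val L pre k v.
Proof.
move=> kE hE hc; exists [seq x \in E | x <- pre]; split; first by rewrite size_map.
rewrite -filter_mask; apply: card_is_ext hc => x; split.
  move=> h d; rewrite inE => /orP [/eqP ->|]; first exact: h.
  by rewrite mem_filter => /andP [dE _]; apply: h.
move=> h d dE; apply: h; case: (hE d dE) => [->|dp]; first by rewrite inE eqxx.
by rewrite inE mem_filter dE dp orbT.
Qed.

End Aux.
Section Aux2.
Variable U : countType.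
Variable L : nat -> U -> Prop.

Lemma IL (ms : nat -> nat) k : forall rp suf, exists pre1 jumped,
  [/\ rev rp = pre1 ++ jumped,
      insert_loop L ms k rp suf = (pre1 ++ k :: jumped ++ suf, mchk L pre1 k),
      (forall A p, pre1 = rcons A p -> ms p < mchk L pre1 k) &
      (forall n, n < size jumped -> mchk L (pre1 ++ take n.+1 jumped) k <= ms (nth 0 jumped n))].
Proof.
elim => [|p rp IH] suf.
  exists [::], [::]; split => //; by case.
rewrite /=; case: ifP => hp.
  exists (rev (p :: rp)), [::]; split => //; first by rewrite cats0.
  move=> A p'; rewrite rev_cons => /rcons_inj [_ <-] //; by rewrite -rev_cons.
have [pre1 [j [e1 e2 e3 e4]]] := IH (p :: suf).
exists pre1, (rcons j p); split => //.
- by rewrite rev_cons e1 rcons_cat.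
- by rewrite e2 cat_rcons.
move=> n; rewrite size_rcons ltnS leq_eqVlt => /orP [/eqP ->|hn].
  rewrite take_oversize ?size_rcons // -rcons_cat -e1 -rev_cons nth_rcons ltnn eqxx.
  by rewrite leqNgt hp.
rewrite -cats1 takel_cat // nth_cat hn; exact: e4.
Qed.

Lemma proc_spec i :
  [/\ forall j, (j \in (proc L i).1) = (j < i),
      forall j, j < i -> (proc L i).2 j = mstar L j &
      pairwise (fun a b => mstar L a <= mstar L b) (proc L i).1].
Proof.
elim: i => [|i [h1 h2 h3]] //=.
case E: (proc L i) => [ord ms]; rewrite E /= in h1 h2 h3.
have [pre1 [j [e1 e2 e3 e4]]] := IL ms i (rev ord) [::].
rewrite e2 /=.
have ms_mstar : forall x, x \in ord -> ms x = mstar L x by move=> x; rewrite h1; exact: h2.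
have ci : mstar L i = mchk L pre1 i by rewrite /mstar /= E e2 /= eqxx.
rewrite revK in e1; rewrite e1 in ms_mstar h1 h3.
split.
- move=> x; rewrite mem_cat inE ltnS leq_eqVlt -h1 !mem_cat in_nil orbF.
  by case: (x == i); case: (x \in pre1); case: (x \in j).
- move=> x; rewrite ltnS leq_eqVlt => /orP [/eqP ->|hx]; first by rewrite eqxx -ci.
  by rewrite (ltn_eqF hx) h2.
rewrite cats0 pairwise_cat pairwise_cons.
move: h3; rewrite pairwise_cat => /and3P [ha hp1 hp2].
rewrite hp1 hp2 /= andbT.
have jge : forall y, y \in j -> mstar L i <= mstar L y.
  move=> y yj; have yo : y \in pre1 ++ j by rewrite mem_cat yj orbT.
  rewrite -(ms_mstar y yo) ci.
  have := e4 (index y j); rewrite index_mem (nth_index 0 yj) => h.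
  exact: leq_trans (mchk_mono L pre1 (take (index y j).+1 j) i) (h yj).
apply/andP; split; last by apply/allP => y yj; exact: jge.
apply/allrelP => a b ap.
have pl : forall y, y \in pre1 -> mstar L y < mstar L i.
  move=> y yp; case E1: pre1 yp => [//|x s] yp.
  have eq : pre1 = rcons (belast x s) (last x s) by rewrite E1 lastI.
  rewrite -E1 eq in yp.
  set A := belast x s in eq yp; set p := last x s in eq yp.
  have hpi : mstar L p < mstar L i.
    rewrite ci -ms_mstar; first exact: e3 eq.
    by rewrite mem_cat eq mem_rcons inE eqxx.
  move: yp; rewrite mem_rcons inE => /orP [/eqP -> //|yA].
  move: hp1; rewrite eq -cats1 pairwise_cat => /andP [/allrelP h _].
  by apply: leq_ltn_trans hpi; apply: h; rewrite ?inE.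
rewrite inE => /orP [/eqP ->|bj]; first exact: ltnW (pl a ap).
exact: leq_trans (ltnW (pl a ap)) (jge b bj).
Qed.

End Aux2.
Section Aux3.
Variable U : countType.
Variable L : nat -> U -> Prop.

Lemma step i : exists pre1 j,
  [/\ (proc L i).1 = pre1 ++ j, mstar L i = mchk L pre1 i,
      (forall y, y \in pre1 -> mstar L y < mstar L i) &
      (forall n, n < size j -> mchk L (pre1 ++ take n.+1 j) i <= mstar L (nth 0 j n))].
Proof.
have [h1 h2 h3] := proc_spec L i.
case E: (proc L i) h1 h2 h3 => [ord ms] /= h1 h2 h3.
have [pre1 [j [e1 e2 e3 e4]]] := IL L ms i (rev ord) [::].
have ms_mstar : forall x, x \in ord -> ms x = mstar L x by move=> x; rewrite h1; exact: h2.
have ci : mstar L i = mchk L pre1 i by rewrite /mstar /= E e2 /= eqxx.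
rewrite revK in e1; rewrite e1 in ms_mstar h1 h3.
exists pre1, j; split => //.
- move=> y yp; case E1: pre1 yp => [//|x s] yp.
  have eq : pre1 = rcons (belast x s) (last x s) by rewrite E1 lastI.
  rewrite -E1 eq in yp.
  set A := belast x s in eq yp; set p := last x s in eq yp.
  have hpi : mstar L p < mstar L i.
    rewrite ci -ms_mstar; first exact: e3 eq.
    by rewrite mem_cat eq mem_rcons inE eqxx.
  move: yp; rewrite mem_rcons inE => /orP [/eqP -> //|yA].
  move: h3; rewrite pairwise_cat eq -cats1 pairwise_cat => /and3P [_ /andP [/allrelP h _] _].
  by apply: leq_ltn_trans hpi; apply: h; rewrite ?inE.
move=> n hn; rewrite -ms_mstar; first exact: e4.
by rewrite mem_cat mem_nth ?orbT.
Qed.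

Lemma lemmaA (E : seq nat) k v : k \in E -> card_is (inter L E) v ->
  exists2 f, f \in E & v <= mstar L f.
Proof.
move=> kE hc.
have exP : exists x, (fun x => x \in E) x by exists k.
have ubP : forall x, (fun x => x \in E) x -> x <= \max_(y <- E) y.
  by move=> x xE; exact: (@leq_bigmax_seq _ E predT id x xE).
case: (ex_maxnP exP ubP) => e eE emax.
have [pre1 [j [e1 e2 e3 e4]]] := step e.
have inord : forall x, x \in E -> x != e -> x \in pre1 ++ j.
  move=> x xE xe; have [h1 _ _] := proc_spec L e.
  rewrite -e1 h1 ltn_neqAle xe /=; exact: emax.
pose P' := fun n => (n < size j) && (nth 0 j n \in E).
case: (classic (exists n, P' n)) => [ex|nex].
  have ub : forall n, P' n -> n <= size j by move=> n /andP [/ltnW].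
  case: (ex_maxnP ex ub) => nm /andP [hnm fE] nmax.
  exists (nth 0 j nm) => //.
  apply: leq_trans (e4 _ hnm); apply: chk_le_mchk; apply: chk_of_sub eE _ hc.
  move=> x xE; case: (eqVneq x e) => [->|xe]; first by left.
  right; have := inord x xE xe; rewrite !mem_cat => /orP [->//|xj].
  rewrite (in_take _ xj) ltnS orbC; apply/orP; left; apply: nmax.
  by rewrite /P' index_mem xj nth_index.
exists e => //; rewrite e2; apply: chk_le_mchk; apply: chk_of_sub eE _ hc.
move=> x xE; case: (eqVneq x e) => [->|xe]; first by left.
right; have := inord x xE xe; rewrite mem_cat => /orP [->//|xj].
case: nex; exists (index x j); by rewrite /P' index_mem xj nth_index.
Qed.

Lemma lemmaB i : 0 < mstar L i -> exists D : seq nat,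
  [/\ i \in D, card_is (inter L D) (mstar L i) &
      forall d, d \in D -> d != i -> mstar L d < mstar L i].
Proof.
move=> hpos; have [pre1 [j [e1 e2 e3 e4]]] := step i.
rewrite e2 in hpos; have [m [hm hc]] := mchk_pos hpos.
exists (i :: mask m pre1); split; first by rewrite inE eqxx.
  by rewrite e2.
move=> d; rewrite inE => /orP [/eqP -> |dm]; first by rewrite eqxx.
move=> _; apply: e3; exact: mem_mask dm.
Qed.

End Aux3.
Unset Implicit Arguments.
Set Strict Implicit.
Definition pb (P : Prop) : bool := if excluded_middle_informative P then true else false.
Lemma pbP (P : Prop) : pb P <-> P.
Proof. rewrite /pb; case: excluded_middle_informative => //. Qed.

Lemma enum_ex (U : countType) (y0 : U) (A : U -> Prop) (w : seq U) :
  A y0 -> (forall y, y \in w -> A y) ->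
  exists x, enumerates A x /\ Defs.prefix x (size w) = w.
Proof.
move=> hy0 hw.
pose e n := match @unpickle U n with Some y => if pb (A y) then y else y0 | None => y0 end.
have eA : forall n, A (e n).
  move=> n; rewrite /e; case: (unpickle n) => // y; case E: (pb (A y)) => //; exact/pbP.
exists (fun t => if t < size w then nth y0 w t else e (t - size w)); split; first split.
- move=> t; case: ifP => ht //; apply: hw; exact: mem_nth.
- move=> y hy; exists (pickle y + size w).
  rewrite ltnNge leq_addl /= addnK /e pickleK.
  by case: (pbP (A y)) => _ h; rewrite (h hy).
rewrite /Defs.prefix; transitivity (mkseq (nth y0 w) (size w)); last exact: mkseq_nth.
apply/eq_in_map => t.
by rewrite mem_iota add0n => /andP [_ ->].
Qed.

Lemma gen_mono (U : countType) (L : nat -> U -> Prop) G i n n' : n <= n' ->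
  gen_with L G i n -> gen_with L G i n'.
Proof. move=> hn hg x hx t ht hs; apply: hg => //; exact: leq_trans hs. Qed.

Theorem mainTheorem3 (U : countType) (L : nat -> U -> Prop) :
  (exists f : nat -> U, injective f) ->
  (forall i, ~ finite_set (L i)) ->
  (forall t, exists N, forall j, mstar L j + 1 <= t -> j < N) ->
  exists (G : algorithm U) (T : nat -> nat),
    nonuniform_gen_times L G T /\ pareto_optimal L T.
Proof.
move=> [f _] hinf hfin.
pose Nf t := epsilon (inhabits 0) (fun N => forall j, mstar L j + 1 <= t -> j < N).
have hNf : forall t j, mstar L j + 1 <= t -> j < Nf t.
  move=> t; exact: (epsilon_spec (inhabits 0) (fun N => forall j, mstar L j + 1 <= t -> j < N) (hfin t)).
pose E (s : seq U) := let n := size (undup s) in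
  [seq j <- iota 0 (Nf n) | (mstar L j < n) && pb (forall y, y \in s -> L j y)].
pose G (s : seq U) := epsilon (inhabits (f 0)) (fun z => inter L (E s) z /\ z \notin s).
pose T i := if mstar L i == 0 then 0 else (mstar L i).+1.
have nonempty : forall d, exists y, L d y.
  move=> d; apply: NNPP => hn; apply: (hinf d); exists 0; exists [::]; split => // y.
  split => // hy; case: hn; by exists y.
exists G, T; split.
  move=> i x [xin xsurj] t tpos hT.
  set s := Defs.prefix x t in hT *.
  set n := size (undup s) in hT.
  have npos : 0 < n.
    rewrite /n lt0n size_eq0; apply/eqP => h.
    have : x 0 \in undup s by rewrite mem_undup /s /Defs.prefix; apply: map_f; rewrite mem_iota.
    by rewrite h.
  have hmi : mstar L i < n.
    move: hT; rewrite /T; case: eqP => [-> _ //|_]; exact.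
  have sL : forall j, (forall y, y \in s -> L j y) <-> (forall y, y \in s -> L j y) by [].
  have iE : i \in E s.
    rewrite mem_filter mem_iota add0n leq0n hNf ?addn1 // hmi /= ?andbT.
    apply (proj2 (pbP _)) => y /mapP [t' _ ->]; exact: xin.
  have exz : exists z, inter L (E s) z /\ z \notin s.
    apply: NNPP => hno.
    have hc : card_is (inter L (E s)) n.
      exists (undup s); split; [exact: undup_uniq| |by []].
      move=> z; rewrite mem_undup; split.
        move=> hz; apply: NNPP => /negP hz'; apply: hno; by exists z.
      move=> zs d; rewrite mem_filter => /andP [/andP [_ /pbP h] _]; exact: h.
    have [g gE hg] := lemmaA iE hc.
    move: gE; rewrite mem_filter => /andP [/andP [hlt _] _].
    by move: (leq_ltn_trans hg hlt); rewrite ltnn.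
  have := epsilon_spec (inhabits (f 0)) (fun z => inter L (E s) z /\ z \notin s) exz.
  rewrite -/(G s) => [[h1 h2]]; split => //; exact: h1.
move=> G' _ i [n [hn hg]].
move: hn; rewrite /T; case: eqP => [_ //|m0] hn.
apply: NNPP => H.
have hall : forall j, j <> i -> gen_with L G' j (T j).
  move=> j ji; apply: NNPP => hnot; apply: H; exists j; split => // n' hg'.
  rewrite ltnNge; apply/negP => hle; apply: hnot; exact: gen_mono hle hg'.
have mpos : 0 < mstar L i by rewrite lt0n; apply/eqP.
have [D [iD hc hlt]] := lemmaB mpos.
have gD : forall d, d \in D -> gen_with L G' d (mstar L i).
  move=> d dD; case: (eqVneq d i) => [->|di]; first by apply: gen_mono hg; rewrite -ltnS.
  have hdi : d <> i by apply/eqP.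
  apply: gen_mono (hall d hdi); rewrite /T; case: ifP => // _.
  exact: hlt.
case: hc => [w [wu hw hsz]].
have key : forall d, d \in D -> L d (G' w) /\ G' w \notin w.
  move=> d dD; have [y0 hy0] := nonempty d.
  have [x [hx hp]] := @enum_ex U y0 (L d) w hy0 (fun y yw => proj2 (hw y) yw d dD).
  have := gD d dD x hx (size w); rewrite hp undup_id // hsz; apply => //.
have : inter L D (G' w) by move=> d dD; case: (key d dD).
move/hw; by case: (key i iD) => _ /negP.
Qed.
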